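(* Consider the two-layer multi-item order fulfillment problem described in the context, with $K\ge 1$ FDCs, fixed costs $f_0\ge 0$ and $f_1,\dots,f_K>0$, and time-invariant variable costs $c_{k,t}^i\equiv c_k^i$. Let \textsc{Cost-Comparison V-Priority} be the Gated Priority-based Greedy policy that uses, for each item $i$, the ranking $k\prec_i j\iff c_k^i<c_j^i$ or ($c_k^i=c_j^i$ and $k<j$) on $\{0,\dots,K\}$, and the gating condition \[G=\mathbb{I}\left(\sum_{k=0}^K\Big[f_k\,\mathbb{I}\Big(\sum_{i=1}^n\hat m_{k,t}^i>0\Big)+\sum_{i=1}^n c_k^i\hat m_{k,t}^i\Big]>f_0+\sum_{i=1}^n c_0^iS_t^i\right).\] Then \[\mathfrak R_{\mathrm{inv}}(\textsc{Cost-Comparison V-Priority})\le\max\left\{\frac{f_0+\sum_{k\in[K]}f_k}{\min_{k\in[K]}f_k},\ 2\right\}.\]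
   Context: Problem. $n$ items, $K$ FDCs indexed $k\in[K]$, an RDC indexed $k=0$ with unlimited inventory. FDC $k$ initially holds $I_{k,0}^i\ge 0$ units of item $i$, never replenished. In periods $t=1,\dots,T$ an order $\boldsymbol S_t=(S_t^i)_i$ of nonnegative integers arrives; the policy must immediately and irrevocably choose $m_{k,t}^i\ge 0$ with $\sum_{k=0}^K m_{k,t}^i=S_t^i$ and $m_{k,t}^i\le I_{k,t-1}^i$ for $k\in[K]$, where $I_{k,t}^i=I_{k,0}^i-\sum_{\tau\le t}m_{k,\tau}^i$. Period cost $\sum_{k=0}^K[f_k\mathbb{I}(\sum_i m_{k,t}^i>0)+\sum_i c_{k,t}^im_{k,t}^i]$; total cost is the sum. An online policy (possibly randomized) decides in period $t$ using only fixed costs, initial inventories and orders/variable costs up to $t$. $\mathrm{ALG}(I)$ is the (expected) total cost on instance $I$, $\mathrm{OPT}(I)$ the offline optimal total cost. The time-invariant competitive ratio $\mathfrak R_{\mathrm{inv}}(\mathrm{ALG})$ is the supremum of $\mathrm{ALG}(I)/\mathrm{OPT}(I)$ over all $n,T$, initial inventories, nonnegative time-invariant variable costs $c_{k,t}^i=c_k^i$ (for all $t$), and order sequences. Gated Priority-based Greedy policy: with rankings $\prec_i$ on $\{0,\dots,K\}$ and gating condition $G$, in each period $t$ compute $\hat m_{k,t}^i=\min\{(S_t^i-\sum_{k'\in[K]:k'\prec_ik}I_{k',t-1}^i)^+,\ I_{k,t-1}^i\}\cdot\mathbb{I}(k\prec_i0)$ for $k\in[K]$ and $\hat m_{0,t}^i=S_t^i-\sum_{k\in[K]}\hat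 m_{k,t}^i$; if $G=1$, send the whole order to the RDC ($m_{0,t}^i=S_t^i$, $m_{k,t}^i=0$ for $k\in[K]$), otherwise set $m_{k,t}^i=\hat m_{k,t}^i$; then update inventories. *)

(* Defs.v *)
From HB Require Import structures.
From mathcomp Require Import all_boot all_order all_algebra.
Set Implicit Arguments. Unset Strict Implicit. Unset Printing Implicit Defensive.
Import Order.TTheory GRing.Theory Num.Theory.
Local Open Scope ring_scope.

(* Locations are 'I_K.+1 : index 0 (= ord0) is the RDC, indices 1..K are FDCs.  Periods t = 1..T of the paper are indexed 0..T-1 here. *)

Section Fulfillment.
Variables (R : realFieldType) (n K : nat).

Definition period_cost (f : 'I_K.+1 -> R) (c : 'I_K.+1 -> 'I_n -> R)
    (m : 'I_K.+1 -> 'I_n -> nat) : R :=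
  \sum_(k < K.+1)
     (f k * (0 < \sum_(i < n) m k i)%N%:R + \sum_(i < n) c k i * (m k i)%:R).

Definition prec (c : 'I_K.+1 -> 'I_n -> R) (i : 'I_n) (k j : 'I_K.+1) : bool :=
  (c k i < c j i) || ((c k i == c j i) && (k < j)%N).

Definition hat_fdc (c : 'I_K.+1 -> 'I_n -> R) (inv : 'I_K.+1 -> 'I_n -> nat)
    (s : 'I_n -> nat) (k : 'I_K.+1) (i : 'I_n) : nat :=
  if prec c i k ord0 then
    minn (s i - \sum_(k' < K.+1 | (k' != ord0) && prec c i k' k) inv k' i)%N
         (inv k i)
  else 0%N.

Definition hat_m (c : 'I_K.+1 -> 'I_n -> R) (inv : 'I_K.+1 -> 'I_n -> nat)
    (s : 'I_n -> nat) (k : 'I_K.+1) (i : 'I_n) : nat :=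
  if k == ord0 then (s i - \sum_(k' < K.+1 | k' != ord0) hat_fdc c inv s k' i)%N
  else hat_fdc c inv s k i.

Definition gate (f : 'I_K.+1 -> R) (c : 'I_K.+1 -> 'I_n -> R)
    (inv : 'I_K.+1 -> 'I_n -> nat) (s : 'I_n -> nat) : bool :=
  period_cost f c (hat_m c inv s) > f ord0 + \sum_(i < n) c ord0 i * (s i)%:R.

Definition ccvp_decision (f : 'I_K.+1 -> R) (c : 'I_K.+1 -> 'I_n -> R)
    (inv : 'I_K.+1 -> 'I_n -> nat) (s : 'I_n -> nat) : 'I_K.+1 -> 'I_n -> nat :=
  if gate f c inv s then (fun k i => if k == ord0 then s i else 0%N)
  else hat_m c inv s.

(* inventory of the policy at the start of period t (index 0 entries unused) *)
Fixpoint ccvp_inv (f : 'I_K.+1 -> R) (c : 'I_K.+1 -> 'I_n -> R)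
    (I0 : 'I_K.+1 -> 'I_n -> nat) (S : nat -> 'I_n -> nat) (t : nat)
    : 'I_K.+1 -> 'I_n -> nat :=
  match t with
  | 0 => I0
  | t'.+1 => fun k i =>
      (ccvp_inv f c I0 S t' k i
       - ccvp_decision f c (ccvp_inv f c I0 S t') (S t') k i)%N
  end.

Definition ccvp_cost (f : 'I_K.+1 -> R) (c : 'I_K.+1 -> 'I_n -> R)
    (I0 : 'I_K.+1 -> 'I_n -> nat) (S : nat -> 'I_n -> nat) (T : nat) : R :=
  \sum_(t < T) period_cost f c (ccvp_decision f c (ccvp_inv f c I0 S t) (S t)).

Definition feasible (I0 : 'I_K.+1 -> 'I_n -> nat) (S : nat -> 'I_n -> nat)
    (T : nat) (m : nat -> 'I_K.+1 -> 'I_n -> nat) : Prop :=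
  forall t, (t < T)%N -> forall i : 'I_n,
    (\sum_(k < K.+1) m t k i)%N = S t i /\
    forall k : 'I_K.+1, k != ord0 ->
      (m t k i <= I0 k i - \sum_(tau < t) m tau k i)%N.

Definition plan_cost (f : 'I_K.+1 -> R) (c : 'I_K.+1 -> 'I_n -> R) (T : nat)
    (m : nat -> 'I_K.+1 -> 'I_n -> nat) : R :=
  \sum_(t < T) period_cost f c (m t).

Definition ratio_bound (f : 'I_K.+1 -> R) : R :=
  Num.max ((f ord0 + \sum_(k < K.+1 | k != ord0) f k)
            / \big[Num.min/f ord_max]_(k < K.+1 | k != ord0) f k) 2.

End Fulfillment.

(* Main.v *)
Require Import Defs.
From HB Require Import structures.
From mathcomp Require Import all_boot all_order all_algebra.
From mathcomp Require Import zify ring lra.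
Import Order.TTheory GRing.Theory Num.Theory.
Local Open Scope ring_scope.

Section Greedy.
Variables (R : realFieldType) (n K : nat) (c : 'I_K.+1 -> 'I_n -> R) (i : 'I_n).

Local Notation pr := (prec c i).

Lemma prec_irr k : pr k k = false.
Proof. by rewrite /prec ltxx ltnn andbF. Qed.

Lemma prec_trans a b d : pr a b -> pr b d -> pr a d.
Proof.
rewrite /prec => /orP[h1|/andP[/eqP e1 h1]] /orP[h2|/andP[/eqP e2 h2]].
- by rewrite (lt_trans h1 h2).
- by rewrite -e2 h1.
- by rewrite e1 h2.
- by rewrite e1 e2 eqxx (ltn_trans h1 h2) orbT.
Qed.

Lemma prec_total a b : a != b -> pr a b || pr b a.
Proof.
move=> nab; rewrite /prec.
case: (ltgtP (c a i) (c b i)) => //= e.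
by move: nab; rewrite -val_eqE neq_ltn.
Qed.

Definition rk (k : 'I_K.+1) := #|[set j | pr j k]|.

Lemma rk_lt a b : pr a b -> (rk a < rk b)%N.
Proof.
move=> hab; apply: proper_card; apply/properP; split.
  by apply/subsetP => j; rewrite !inE => h; apply: prec_trans h hab.
by exists a; rewrite !inE ?hab ?prec_irr.
Qed.

Lemma greedy (inv : 'I_K.+1 -> 'I_n -> nat) (s : 'I_n -> nat) (P : {set 'I_K.+1}) :
  (forall k, k \in P -> (k != ord0) && pr k ord0) ->
  (forall k k', k \in P -> k' != ord0 -> pr k' k -> k' \in P) ->
  (\sum_(k in P) hat_fdc c inv s k i = minn (s i) (\sum_(k in P) inv k i))%N.
Proof.
move: {2}#|P| (leqnn #|P|) => N; elim: N P => [|N IH] P hN hP hd.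
  have -> : P = set0 by apply/eqP; rewrite -cards_eq0 -leqn0.
  by rewrite !big_set0 minn0.
case: (set_0Vmem P) => [->|[k0 k0P]]; first by rewrite !big_set0 minn0.
case: (arg_maxnP rk k0P) => ks ksP0 ksmax.
have ksP : ks \in P := ksP0.
set P' := P :\ ks.
have eqP' : forall k', ((k' != ord0) && pr k' ks) = (k' \in P').
  move=> k'; rewrite !inE; apply/idP/idP.
  - case/andP => h1 h2; rewrite (hd ks k') // andbT.
    by apply/eqP => e; rewrite e prec_irr in h2.
  - case/andP => h1 h2; case/andP: (hP _ h2) => -> _ /=.
    case/orP: (prec_total _ _ h1) => // h.
    by have := ksmax _ h2; have := rk_lt _ _ h; lia.
rewrite (bigD1 ks) //= [X in minn _ X](bigD1 ks) //=.
have -> : (\sum_(k in P | k != ks) hat_fdc c inv s k i = \sum_(k in P') hat_fdc c inv s k i)%N.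
  by apply: eq_bigl => k; rewrite !inE andbC.
have -> : (\sum_(k in P | k != ks) inv k i = \sum_(k in P') inv k i)%N.
  by apply: eq_bigl => k; rewrite !inE andbC.
rewrite IH.
- rewrite /hat_fdc; case/andP: (hP _ ksP) => _ ->.
  have -> : (\sum_(k' < K.+1 | (k' != ord0) && pr k' ks) inv k' i = \sum_(k in P') inv k i)%N.
    by apply: eq_bigl.
  lia.
- by move: hN; rewrite (cardsD1 ks P) ksP.
- by move=> k; rewrite inE => /andP[_ /hP].
- move=> k k'; rewrite !inE => /andP[kks kP] k'0 hk'k.
  rewrite (hd k k') // andbT; apply/eqP => e; subst k'.
  by have := ksmax _ kP; have := rk_lt _ _ hk'k; lia.
Qed.

End Greedy.

Section Dom.
Variable R : realFieldType.

Lemma dom (I : finType) (N : nat) : forall (c x y : I -> R),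
  (forall k, 0 <= c k) -> (#|[set k | (0 < c k)%R]| <= N)%N ->
  (forall l, 0 <= l -> \sum_(k | l < c k) x k <= \sum_(k | l < c k) y k) ->
  \sum_k c k * x k <= \sum_k c k * y k.
Proof.
elim: N => [|N IH] c x y hc hN hd.
  have c0 : forall k, c k = 0.
    move=> k; apply/eqP; rewrite eq_le hc andbT leNgt; apply/negP => h.
    have : k \in [set k | 0 < c k] by rewrite inE.
    by move: hN; rewrite leqn0 cards_eq0 => /eqP ->; rewrite inE.
  by rewrite !big1 // => k _; rewrite c0 mul0r.
case: (pickP (fun k => 0 < c k)) => [k1 hk1|hnone]; last first.
  have c0 : forall k, c k = 0.
    move=> k; apply/eqP; rewrite eq_le hc andbT leNgt; apply/negP => h.
    by rewrite hnone in h.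
  by rewrite !big1 // => k _; rewrite c0 mul0r.
case: (@arg_minP _ _ _ k1 (fun k => 0 < c k) c hk1) => k0 hk0 k0min.
set m0 := c k0.
pose c' k := if 0 < c k then c k - m0 else 0.
have hc' : forall k, 0 <= c' k.
  by move=> k; rewrite /c'; case: ifP => // h; rewrite subr_ge0 k0min.
have split_sum : forall z : I -> R, \sum_k c k * z k = m0 * \sum_(k | 0 < c k) z k + \sum_k c' k * z k.
  move=> z; rewrite (big_mkcond (fun k => 0 < c k)) /= mulr_sumr -big_split /=; apply: eq_bigr => k _.
  rewrite /c'; case: ifP => h.
  - by rewrite mulrBl addrC subrK.
  - have -> : c k = 0 by apply/eqP; rewrite eq_le hc andbT leNgt h.
    by rewrite !mulr0 !mul0r add0r.
rewrite !split_sum; apply: lerD.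
  by apply: ler_wpM2l; [exact: ltW | exact: hd].
apply: IH => //.
  have : ([set k | 0 < c' k] \subset [set k | 0 < c k] :\ k0).
    apply/subsetP => k; rewrite !inE /c'.
    case: ifP => h; last by rewrite ltxx.
    rewrite andbT subr_gt0 => h2; apply/eqP => e; subst k.
    by rewrite ltxx in h2.
  move/subset_leq_card; move: hN; rewrite (cardsD1 k0) !inE hk0 /=.
  lia.
move=> l hl.
have e : forall k, (l < c' k) = (l + m0 < c k).
  move=> k; rewrite /c'; case: ifP => h.
  - by rewrite ltrBrDr.
  - apply/idP/idP => h2; first by move: (le_lt_trans hl h2); rewrite ltxx.
    have : 0 < c k; last by rewrite h.
    by apply: lt_trans h2; rewrite ltr_pwDr.
rewrite !(eq_bigl _ _ e); apply: hd.
by rewrite addr_ge0 // ltW.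
Qed.

Lemma count_lemma (T C : nat) (s u a : nat -> nat) :
  a 0%N = C -> (forall t, a t <= a t.+1 + minn (s t) (a t))%N ->
  (forall t, t < T -> u t <= s t)%N -> (\sum_(t < T) u t <= C)%N ->
  (\sum_(t < T) (s t - minn (s t) (a t)) <= \sum_(t < T) (s t - u t))%N.
Proof.
move=> a0 ha hu hU.
have key : forall T', (minn C (\sum_(t < T') s t) <= \sum_(t < T') minn (s t) (a t))%N /\
    (C <= a T' + \sum_(t < T') minn (s t) (a t))%N.
  elim=> [|T' [IH1 IH2]]; first by rewrite !big_ord0; lia.
  rewrite !big_ord_recr /=; have := ha T'; move: IH1 IH2.
  set X := (\sum_(i < T') s i)%N; set M := (\sum_(i < T') minn (s i) (a i))%N. lia.
have e1 : (\sum_(t < T) (s t - minn (s t) (a t)) + \sum_(t < T) minn (s t) (a t) = \sum_(t < T) s t)%N.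
  by rewrite -big_split /=; apply: eq_bigr => t _; rewrite subnK // geq_minl.
have e2 : (\sum_(t < T) (s t - u t) + \sum_(t < T) u t = \sum_(t < T) s t)%N.
  by rewrite -big_split /=; apply: eq_bigr => t _; rewrite subnK // hu.
have := key T; lia.
Qed.

End Dom.

Lemma arith1 (s a b : nat) : (a + b <= s -> s - (a + b) + b = s - a)%N.
Proof. lia. Qed.

Lemma arith2 (a b x : nat) : (a <= b -> x <= b - a -> a + x <= b)%N.
Proof. lia. Qed.

Section Main.
Variables (R : realFieldType) (n K : nat) (f : 'I_K.+1 -> R) (c : 'I_K.+1 -> 'I_n -> R).

Definition varc (d : 'I_K.+1 -> 'I_n -> nat) : R :=
  \sum_(k < K.+1) \sum_(i < n) c k i * (d k i)%:R.
Definition fixp (d : 'I_K.+1 -> 'I_n -> nat) : R :=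
  \sum_(k < K.+1) f k * (0 < \sum_(i < n) d k i)%N%:R.

Lemma pc_split d : period_cost f c d = fixp d + varc d.
Proof. by rewrite /period_cost -big_split. Qed.

Lemma pc_rdc d : (forall k i, k != ord0 -> d k i = 0%N) ->
  period_cost f c d = f ord0 * (0 < \sum_(i < n) d ord0 i)%N%:R + \sum_(i < n) c ord0 i * (d ord0 i)%:R.
Proof.
move=> h; rewrite /period_cost (bigD1 ord0) //= [X in _ + X = _]big1 ?addr0 // => k hk.
rewrite big1 => [|i _]; last by rewrite h.
rewrite ltnn mulr0 add0r big1 // => i _; by rewrite (h k i hk) mulr0.
Qed.

Lemma varc_ge0 d : (forall k i, 0 <= c k i) -> 0 <= varc d.
Proof. by move=> hc; apply: sumr_ge0 => k _; apply: sumr_ge0 => i _; rewrite mulr_ge0. Qed.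

Lemma fixp_ge0 d : (forall k, 0 <= f k) -> 0 <= fixp d.
Proof. by move=> hf; apply: sumr_ge0 => k _; rewrite mulr_ge0. Qed.

Lemma fixp_le d : (forall k, 0 <= f k) -> fixp d <= \sum_k f k.
Proof.
move=> hf; apply: ler_sum => k _.
by case: (0 < _)%N; rewrite ?mulr1 ?mulr0.
Qed.

Lemma fixp_ge d k0 : (forall k, 0 <= f k) -> (0 < \sum_(i < n) d k0 i)%N -> f k0 <= fixp d.
Proof.
move=> hf h; rewrite /fixp (bigD1 k0) //= h mulr1 lerDl.
by apply: sumr_ge0 => k _; rewrite mulr_ge0.
Qed.

Lemma hat_zero inv s : (forall i, s i = 0%N) -> forall k i, hat_m c inv s k i = 0%N.
Proof.
move=> hs k i; rewrite /hat_m /hat_fdc hs; case: ifP => _; first by rewrite sub0n.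
by case: ifP => _ //; rewrite sub0n min0n.
Qed.

Lemma hat_sum inv s i : (\sum_(k < K.+1 | k != ord0) hat_fdc c inv s k i <= s i)%N.
Proof.
rewrite (bigID (fun k => prec c i k ord0)) /= [X in (_ + X)%N]big1; last first.
  by move=> k /andP[_ h]; rewrite /hat_fdc (negbTE h).
rewrite addn0.
set Q := [set k | (k != ord0) && prec c i k ord0].
rewrite (eq_bigl (fun k => k \in Q)); last by move=> k; rewrite inE.
rewrite greedy ?geq_minl //.
- by move=> k; rewrite inE.
- move=> k k'; rewrite !inE => /andP[_ h] h' hp; rewrite h' /=.
  exact: prec_trans hp h.
Qed.

Definition Pset (i : 'I_n) (l : R) := [set k : 'I_K.+1 | (k != ord0) && (c k i <= l)].

Lemma Pset_greedy {i l} : l < c ord0 i ->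
  (forall k, k \in Pset i l -> (k != ord0) && prec c i k ord0) /\
  (forall k k', k \in Pset i l -> k' != ord0 -> prec c i k' k -> k' \in Pset i l).
Proof.
move=> hl; split.
- move=> k; rewrite inE => /andP[-> h] /=; rewrite /prec (le_lt_trans h hl) //.
- move=> k k'; rewrite !inE => /andP[_ h] -> /= hp; apply: le_trans h.
  by case/orP: hp => [/ltW //|/andP[/eqP -> _]].
Qed.

Lemma hat_split inv s i l : l < c ord0 i ->
  (\sum_(k | (l < c k i)%R) hat_m c inv s k i = s i - minn (s i) (\sum_(k in Pset i l) inv k i))%N.
Proof.
move=> hl; case: (Pset_greedy hl : _ /\ _) => g1 g2.
rewrite (bigD1 ord0) //= {1}/hat_m eqxx.
rewrite (eq_bigr (fun k => hat_fdc c inv s k i)); last first.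
  by move=> k /andP[_ hk]; rewrite /hat_m (negbTE hk).
have := hat_sum inv s i.
rewrite (bigID (fun k => c k i <= l)) /=.
rewrite (eq_bigl (fun k => k \in Pset i l)); last by move=> k; rewrite inE.
rewrite greedy //.
rewrite (eq_bigl (fun k => (l < c k i) && (k != ord0)) (fun k => hat_fdc c inv s k i)); last first.
  by move=> k; rewrite -ltNge andbC.
by apply: arith1.
Qed.

Lemma opt_split (mt : 'I_K.+1 -> 'I_n -> nat) (s : 'I_n -> nat) i l : l < c ord0 i ->
  (\sum_(k < K.+1) mt k i = s i)%N ->
  (\sum_(k | (l < c k i)%R) mt k i = s i - \sum_(k in Pset i l) mt k i)%N.
Proof.
move=> hl hs.
have E : (\sum_(k < K.+1) mt k i = \sum_(k | (l < c k i)%R) mt k i + \sum_(k in Pset i l) mt k i)%N.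
  rewrite (bigID (fun k => l < c k i)) /=; congr addn; apply: eq_bigl => k.
  rewrite inE -leNgt; case: (eqVneq k ord0) => [->|//].
  by rewrite leNgt hl.
rewrite hs in E; rewrite E addnK //.
Qed.

Lemma alg_step inv s i l : l < c ord0 i ->
  (\sum_(k in Pset i l) inv k i <=
   \sum_(k in Pset i l) (inv k i - ccvp_decision f c inv s k i) +
   minn (s i) (\sum_(k in Pset i l) inv k i))%N.
Proof.
move=> hl; case: (Pset_greedy hl : _ /\ _) => g1 g2.
rewrite -(@greedy _ _ _ c i inv s) // -big_split /=; apply: leq_sum => k kP.
have : (ccvp_decision f c inv s k i <= hat_fdc c inv s k i)%N.
  case/andP: (g1 k kP) => k0 _.
  rewrite /ccvp_decision; case: ifP => _; first by rewrite (negbTE k0).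
  by rewrite /hat_m (negbTE k0).
lia.
Qed.

Lemma hat_none inv s i l k : ~~ (l < c ord0 i) -> l < c k i -> hat_m c inv s k i = 0%N.
Proof.
move=> hl hk; rewrite /hat_m; case: (eqVneq k ord0) => [e|k0].
  by subst k; rewrite hk in hl.
rewrite /hat_fdc; case: ifP => // hp; exfalso.
move: hp; rewrite /prec ltn0 andbF orbF => h.
by move: hl; rewrite -leNgt => hl; have := lt_le_trans (lt_trans hk h) hl; rewrite ltxx.
Qed.

Lemma per_period (B fmin : R) inv s (mt : 'I_K.+1 -> 'I_n -> nat) :
  (forall k, 0 <= f k) -> (forall k i, 0 <= c k i) ->
  2 <= B -> \sum_k f k <= B * fmin -> (forall k, k != ord0 -> fmin <= f k) ->
  (forall i, \sum_(k < K.+1) mt k i = s i)%N ->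
  period_cost f c (ccvp_decision f c inv s) <=
    B * period_cost f c mt - varc mt + varc (hat_m c inv s).
Proof.
move=> hf hc hB hF hmin hs.
set h := hat_m c inv s.
have Gd : period_cost f c (fun k i => if k == ord0 then s i else 0%N) =
    f ord0 * (0 < \sum_(i < n) s i)%N%:R + \sum_(i < n) c ord0 i * (s i)%:R.
  by rewrite pc_rdc // => k i /negbTE ->.
have fb : forall b : bool, f ord0 * b%:R <= f ord0.
  by case; rewrite ?mulr1 ?mulr0.
have alg_hat : period_cost f c (ccvp_decision f c inv s) <= period_cost f c h.
  rewrite /ccvp_decision; case: ifP => g //.
  rewrite Gd; apply: le_trans (ltW g); exact: lerD.
have pch : period_cost f c h <= \sum_k f k + varc h.
  by rewrite pc_split lerD2r fixp_le.
have W0 := varc_ge0 mt hc; have V0 := varc_ge0 h hc.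
have F0 := fixp_ge0 mt hf.
case: (boolP [exists k, (k != ord0) && (0 < \sum_(i < n) mt k i)%N]).
  case/existsP => k0 /andP[k00 hk0].
  have o1 : f k0 <= fixp mt by apply: fixp_ge.
  have o2 := hmin k0 k00.
  have B0 : 0 <= B by apply: le_trans hB.
  have p1 : B * fmin <= B * fixp mt.
    by apply: ler_wpM2l => //; apply: le_trans o2 o1.
  have p2 : 0 <= (B - 1) * varc mt by apply: mulr_ge0 => //; lra.
  rewrite [period_cost f c mt]pc_split; lra.
rewrite negb_exists => /forallP H.
have mz : forall k i, k != ord0 -> mt k i = 0%N.
  move=> k i hk; move: (H k); rewrite hk /= -leqNgt leqn0 => /eqP e.
  by move: e; rewrite (bigD1 i) //=; lia.
have m0 : forall i, mt ord0 i = s i.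
  move=> i; rewrite -hs (bigD1 ord0) //= big1 ?addn0 // => k hk; exact: mz.
have opt : period_cost f c mt = f ord0 * (0 < \sum_(i < n) s i)%N%:R + \sum_(i < n) c ord0 i * (s i)%:R.
  rewrite pc_rdc // (eq_bigr (fun i => s i)) //.
  by congr (_ + _); apply: eq_bigr => i _; rewrite m0.
have alg_opt : period_cost f c (ccvp_decision f c inv s) <= period_cost f c mt.
  rewrite opt /ccvp_decision; case: ifP => g; first by rewrite Gd.
  move: g; rewrite /gate => /negbT; rewrite -leNgt => g.
  case: (posnP (\sum_(i < n) s i)) => hz. 2: by rewrite mulr1.
  have s0 : forall i, s i = 0%N.
    by move=> i; move: hz; rewrite (bigD1 i) //=; lia.
  rewrite ?ltnn mulr0 add0r big1 ?sumr_ge0 //; last by move=> i _; rewrite s0 mulr0.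
  rewrite pc_rdc; last by move=> k i _; rewrite hat_zero.
  rewrite big1 ?mulr0 ?add0r; last by move=> i _; rewrite hat_zero.
  by rewrite big1 // => i _; rewrite hat_zero // mulr0.
have p3 : 0 <= (B - 2) * period_cost f c mt.
  by apply: mulr_ge0; [lra | rewrite pc_split; lra].
have : varc mt <= period_cost f c mt by rewrite pc_split; lra.
lra.
Qed.

Lemma opt_cap (I0 : 'I_K.+1 -> 'I_n -> nat) S T m k i :
  feasible I0 S T m -> k != ord0 -> (\sum_(t < T) m t k i <= I0 k i)%N.
Proof.
move=> hm hk.
suff : forall t, (t <= T)%N -> (\sum_(tau < t) m tau k i <= I0 k i)%N by apply.
elim=> [|t IH] ht; first by rewrite big_ord0.
rewrite big_ord_recr /=.
have := (hm t ht i).2 k hk; have := IH (ltnW ht); exact: arith2.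
Qed.

Lemma var_sum (g : nat -> 'I_K.+1 -> 'I_n -> nat) T :
  \sum_(t < T) varc (g t) = \sum_(i < n) \sum_(k < K.+1) c k i * (\sum_(t < T) g t k i)%:R.
Proof.
rewrite /varc exchange_big /= [RHS]exchange_big /=; apply: eq_bigr => k _.
rewrite exchange_big /=; apply: eq_bigr => i _.
by rewrite natr_sum mulr_sumr.
Qed.

Lemma nat_dom (I0 : 'I_K.+1 -> 'I_n -> nat) S T m i l :
  feasible I0 S T m ->
  (\sum_(k | (l < c k i)%R) \sum_(t < T) hat_m c (ccvp_inv f c I0 S t) (S t) k i <=
   \sum_(k | (l < c k i)%R) \sum_(t < T) m t k i)%N.
Proof.
move=> hm.
case: (boolP (l < c ord0 i)) => hl; last first.
  rewrite big1 // => k hk; rewrite big1 // => t _; exact: hat_none hl hk.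
rewrite exchange_big [X in (_ <= X)%N]exchange_big /=.
rewrite (eq_bigr (fun t : 'I_T => S t i - minn (S t i)
     (\sum_(k in Pset i l) ccvp_inv f c I0 S t k i)))%N; last first.
  by move=> t _; rewrite hat_split.
rewrite [X in (_ <= X)%N](eq_bigr (fun t : 'I_T => S t i - \sum_(k in Pset i l) m t k i))%N; last first.
  by move=> t _; rewrite (opt_split (m t) (S t) i l hl (hm t (ltn_ord t) i).1).
apply: (@count_lemma T (\sum_(k in Pset i l) I0 k i) (fun t => S t i)
   (fun t => \sum_(k in Pset i l) m t k i)
   (fun t => \sum_(k in Pset i l) ccvp_inv f c I0 S t k i)).
- by [].
- by move=> t /=; apply: alg_step.
- move=> t ht; rewrite -(hm t ht i).1 [X in (_ <= X)%N](bigID (fun k => k \in Pset i l)) /=.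
  exact: leq_addr.
- rewrite exchange_big /=; apply: leq_sum => k; rewrite inE => /andP[hk _].
  exact: (opt_cap _ _ _ _ _ _ hm hk).
Qed.

End Main.
Arguments varc {R n K}.
Arguments var_sum {R n K}.

Theorem theorem3 (R : realFieldType) (K : nat) (hK : (1 <= K)%N)
    (f : 'I_K.+1 -> R) (hf0 : 0 <= f ord0)
    (hf : forall k : 'I_K.+1, k != ord0 -> 0 < f k)
    (n T : nat) (c : 'I_K.+1 -> 'I_n -> R)
    (hc : forall k i, 0 <= c k i)
    (I0 : 'I_K.+1 -> 'I_n -> nat) (S : nat -> 'I_n -> nat)
    (m : nat -> 'I_K.+1 -> 'I_n -> nat) (hm : feasible I0 S T m) :
  ccvp_cost f c I0 S T <= ratio_bound f * plan_cost f c T m.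
Proof.
set B := ratio_bound f.
set fmin := \big[Num.min/f ord_max]_(k | k != ord0) f k.
have hf' : forall k, 0 <= f k.
  by move=> k; case: (eqVneq k ord0) => [->|/hf/ltW].
have hmin : forall k, k != ord0 -> fmin <= f k.
  by move=> k hk; apply: bigmin_le_cond.
have fmin0 : 0 < fmin.
  apply: (big_ind (fun x => 0 < x)).
  - apply: hf; rewrite -val_eqE /=; lia.
  - by move=> x y hx hy; rewrite lt_min hx hy.
  - by move=> k /hf.
have FF : \sum_k f k = f ord0 + \sum_(k | k != ord0) f k by rewrite (bigD1 ord0).
have hB2 : 2 <= B by rewrite /B /ratio_bound le_max lexx orbT.
have hF : \sum_k f k <= B * fmin.
  have h1 : (f ord0 + \sum_(k | k != ord0) f k) / fmin <= B by rewrite /B /ratio_bound le_max lexx.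
  rewrite FF -[X in X <= _](divfK (lt0r_neq0 fmin0)).
  by apply: ler_wpM2r => //; apply: ltW.
rewrite /ccvp_cost /plan_cost.
have step : \sum_(t < T) period_cost f c (ccvp_decision f c (ccvp_inv f c I0 S t) (S t)) <= \sum_(t < T) (B * period_cost f c (m t) - varc c (m t) +
    varc c (hat_m c (ccvp_inv f c I0 S t) (S t))).
  apply: ler_sum => t _; apply: (@per_period _ _ _ f c B fmin) => //.
  by move=> i; exact: (hm t (ltn_ord t) i).1.
apply: le_trans step _.
have dom_all : \sum_(t < T) varc c (hat_m c (ccvp_inv f c I0 S t) (S t)) <=
    \sum_(t < T) varc c (m t).
  rewrite (var_sum c (fun t => hat_m c (ccvp_inv f c I0 S t) (S t))) var_sum.
  apply: ler_sum => i _; apply: (@dom _ _ K.+1).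
  - by move=> k; apply: hc.
  - by apply: leq_trans (max_card _) _; rewrite card_ord.
  - move=> l hl; rewrite -!natr_sum ler_nat; exact: nat_dom.
rewrite big_split /= sumrB -mulr_sumr; lra.
Qed.
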